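(* Let $I$ be a finite poset whose Hasse digraph $\mathcal H(I)$ is isomorphic to one of the following digraphs $\mathcal F_1,\dots,\mathcal F_7$, where an ''edge'' means an arrow that may be oriented either way. Then $I$ is indefinite. $\mathcal F_1$: vertices $a_1,a_2,b_1,b_2,c$; arrows $a_1\to b_1,a_1\to b_2,a_2\to b_1,a_2\to b_2$; an edge between $a_2$ and $c$. $\mathcal F_2$: vertices $a_1,a_2,b_1,b_2,c$; arrows $a_1\to b_1,a_1\to b_2,a_2\to b_1,a_2\to b_2$; an edge between $b_2$ and $c$. $\mathcal F_3$: a tree with one vertex of degree $3$ whose three arms contain $4$, $3$ and $1$ vertices, all edges oriented arbitrarily ($9$ vertices). $\mathcal F_4$: a tree with one vertex of degree $3$ whose three arms contain $6$, $2$ and $1$ vertices, all edges oriented arbitrarily ($10$ vertices). $\mathcal F_5$: vertices $x_1,\dots,x_8,u,c$; arrows $x_1\to x_2\to\cdots\to x_8$, $x_1\to u$, $u\to x_8$; an edge between $x_8$ and $c$. $\mathcal F_6$: vertices $x_1,\dots,x_8,u,c$; arrows $x_1\to x_2\to\cdots\to x_8$, $x_1\to u$, $u\to x_8$; an edge between $x_1$ and $c$. $\mathcal F_7$: vertices $x_1,\dots,x_8,u_1,u_2$; arrows $x_1\to x_2\to\cdots\to x_8$, $x_1\to u_1\to u_2\to x_8$.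
   Context: For a finite poset $I$ on $\{1,\dots,n\}$: $C_I=[c_{ij}]$ with $c_{ij}=1$ iff $i\preceq_I j$ (else $0$), $G_I=\tfrac12(C_I+C_I^{tr})$; $I$ is indefinite if $G_I$ is neither positive nor negative semi-definite. The Hasse digraph $\mathcal H(I)$ has an arrow $i\to j$ iff $i\prec_I j$ and there is no $k$ with $i\prec_I k\prec_I j$. *)

(* Defs.v *)
From HB Require Import structures.
From mathcomp Require Import all_boot all_order all_algebra.
Set Implicit Arguments. Unset Strict Implicit. Unset Printing Implicit Defensive.
Import Order.TTheory GRing.Theory Num.Theory.
Local Open Scope ring_scope.

Definition is_poset (n : nat) (le : rel 'I_n) : Prop :=
  [/\ reflexive le, antisymmetric le & transitive le].

Definition plt (n : nat) (le : rel 'I_n) : rel 'I_n :=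
  fun i j => (i != j) && le i j.

Definition hasse (n : nat) (le : rel 'I_n) : rel 'I_n :=
  fun i j => plt le i j && [forall k, ~~ (plt le i k && plt le k j)].

Definition incmx (R : nzRingType) (n : nat) (le : rel 'I_n) : 'M[R]_n :=
  \matrix_(i, j) (le i j)%:R.

Definition gram (R : fieldType) (n : nat) (le : rel 'I_n) : 'M[R]_n :=
  (2%:R)^-1 *: (incmx R le + (incmx R le)^T).

Definition psd (R : realFieldType) (n : nat) (M : 'M[R]_n) : Prop :=
  forall x : 'cV[R]_n, 0 <= (x^T *m M *m x) 0 0.

Definition nsd (R : realFieldType) (n : nat) (M : 'M[R]_n) : Prop :=
  forall x : 'cV[R]_n, (x^T *m M *m x) 0 0 <= 0.

Definition indefinite (R : realFieldType) (n : nat) (le : rel 'I_n) : Prop :=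
  ~ psd (gram R le) /\ ~ nsd (gram R le).

(* D is an orientation of the "pattern" on vertices 0..m-1 with fixed arrows
   [arrs] and edges [edges] that may be oriented either way: D contains every
   fixed arrow, exactly one orientation of each edge, and nothing else. *)
Definition orientation (m : nat) (arrs edges : seq (nat * nat)) (D : rel 'I_m)
  : Prop :=
  [/\ (forall u v : 'I_m, D u v ->
         [|| (val u, val v) \in arrs, (val u, val v) \in edges
           | (val v, val u) \in edges]),
      (forall u v : 'I_m, (val u, val v) \in arrs -> D u v) &
      (forall u v : 'I_m, (val u, val v) \in edges -> D u v (+) D v u)].

Definition hasse_iso_pattern (n : nat) (le : rel 'I_n)
  (m : nat) (arrs edges : seq (nat * nat)) : Prop :=
  exists (f : 'I_n -> 'I_m) (D : rel 'I_m),
    [/\ bijective f, orientation arrs edges D &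
        forall i j, hasse le i j = D (f i) (f j)].

(* F1, F2: a1=0, a2=1, b1=2, b2=3, c=4 *)
Definition F12_arrs : seq (nat * nat) := [:: (0,2); (0,3); (1,2); (1,3)]%N.
Definition F1_edges : seq (nat * nat) := [:: (1,4)]%N.
Definition F2_edges : seq (nat * nat) := [:: (3,4)]%N.
(* F3: centre 0, arms 1-2-3-4, 5-6-7, 8 *)
Definition F3_edges : seq (nat * nat) :=
  [:: (0,1); (1,2); (2,3); (3,4); (0,5); (5,6); (6,7); (0,8)]%N.
(* F4: centre 0, arms 1-2-3-4-5-6, 7-8, 9 *)
Definition F4_edges : seq (nat * nat) :=
  [:: (0,1); (1,2); (2,3); (3,4); (4,5); (5,6); (0,7); (7,8); (0,9)]%N.
(* F5, F6: x_i = i-1 (0..7), u = 8, c = 9 *)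
Definition chain8 : seq (nat * nat) :=
  [:: (0,1); (1,2); (2,3); (3,4); (4,5); (5,6); (6,7)]%N.
Definition F56_arrs : seq (nat * nat) := chain8 ++ [:: (0,8); (8,7)]%N.
Definition F5_edges : seq (nat * nat) := [:: (7,9)]%N.
Definition F6_edges : seq (nat * nat) := [:: (0,9)]%N.
(* F7: x_i = i-1 (0..7), u1 = 8, u2 = 9 *)
Definition F7_arrs : seq (nat * nat) := chain8 ++ [:: (0,8); (8,9); (9,7)]%N.

(* Main.v *)
Require Import Defs.
From HB Require Import structures.
From mathcomp Require Import all_boot all_order all_algebra.
From mathcomp Require Import ring.
Import Order.TTheory GRing.Theory Num.Theory.
Local Open Scope ring_scope.

Definition bitof (edges : seq (nat*nat)) (bits : seq bool) (p : nat*nat) :=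
  nth false bits (index p edges).
Definition Dn (arrs edges : seq (nat*nat)) (bits : seq bool) (u v : nat) : bool :=
  [|| (u,v) \in arrs, ((u,v) \in edges) && bitof edges bits (u,v)
    | ((v,u) \in edges) && ~~ bitof edges bits (v,u)].
Fixpoint clos (E : nat -> nat -> bool) (m k u v : nat) : bool :=
  match k with 0 => u == v
  | k'.+1 => if u == v then true
             else has (fun w => if E u w then clos E m k' w v else false) (iota 0 m) end.
Definition sumz (s : seq nat) (F : nat -> int) : int := foldr (fun i acc => F i + acc) 0 s.
Definition qz (m : nat) (L : nat -> nat -> bool) (x : nat -> int) : int :=
  sumz (iota 0 m) (fun u => sumz (iota 0 m) (fun v => x u * x v * (L u v)%:Z)).
Fixpoint allbits k : seq (seq bool) :=
  if k is k'.+1 then map (cons true) (allbits k') ++ map (cons false) (allbits k') else [:: [::]].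
Definition mat (m : nat) (F : nat -> nat -> bool) : seq (seq bool) :=
  [seq [seq F u v | v <- iota 0 m] | u <- iota 0 m].
Definition matf (M : seq (seq bool)) (u v : nat) : bool := nth false (nth [::] M u) v.
Definition chkb (m : nat) (arrs edges : seq (nat*nat)) (wit : seq bool -> seq int) (bits : seq bool) :=
  let xs := wit bits in
  let Em := mat m (Dn arrs edges bits) in
  let Lm := mat m (clos (matf Em) m m.+1) in
  qz m (matf Lm) (fun i => nth 0 xs i) < 0.
Definition chk (m : nat) (arrs edges : seq (nat*nat)) (wit : seq bool -> seq int) :=
  all (chkb m arrs edges wit) (allbits (size edges)).
Definition treewit (m : nat) (arrs edges : seq (nat*nat)) (z : seq int) (bits : seq bool) :=
  [seq nth 0 z i - sumz (iota 0 m) (fun j => if Dn arrs edges bits i j then nth 0 z j else 0) | i <- iota 0 m].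

Lemma closS E m k u v : clos E m k.+1 u v =
  (u == v) || has (fun w => E u w && clos E m k w v) (iota 0 m).
Proof. by []. Qed.


Lemma allbitsP k s : size s = k -> s \in allbits k.
Proof.
elim: k s => [|k IH] [|b s] //= [hs].
by rewrite mem_cat; case: b; rewrite (mem_map (fun x y => _)) ?IH ?orbT //; move=> x y [].
Qed.

Lemma matfE M F u v : (u < M)%N -> (v < M)%N -> matf (mat M F) u v = F u v.
Proof.
move=> hu hv; rewrite /matf /mat (nth_map 0%N) ?size_iota // nth_iota //.
by rewrite (nth_map 0%N) ?size_iota // nth_iota.
Qed.

Lemma sumz_cast (R : pzRingType) s F : ((sumz s F)%:~R : R) = \sum_(i <- s) (F i)%:~R.
Proof. by elim: s => [|a s IH]; rewrite ?big_nil ?big_cons //= intrD IH. Qed.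

Section Poset.
Variables (n : nat) (le : rel 'I_n).
Hypothesis P : is_poset le.

Lemma le_refl i : le i i. Proof. by case: P. Qed.
Lemma le_trans' {i j k} : le i j -> le j k -> le i k. Proof. by case: P => _ _ t; apply: t. Qed.
Lemma le_anti {i j} : le i j -> le j i -> i = j.
Proof. by case: P => _ a _ h1 h2; apply: a; rewrite h1 h2. Qed.
Lemma plt_le {i j} : plt le i j -> le i j. Proof. by case/andP. Qed.

Lemma cover {i w} : plt le i w -> exists2 c, hasse le i c & le c w.
Proof.
suff: forall N w, (#|[set y | plt le i y && plt le y w]| < N)%N -> plt le i w ->
   exists2 c, hasse le i c & le c w by move=> H; apply: H (ltnSn _).
elim=> // N IH {}w hN hiw.
case hh: [forall k, ~~ (plt le i k && plt le k w)].
  by exists w; [rewrite /hasse hiw hh | apply: le_refl].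
move: hh => /negbT; rewrite negb_forall => /existsP [y]; rewrite negbK => /andP [hiy hyw].
have [|c hc hcy] := IH y _ hiy; last by exists c => //; exact: (le_trans' hcy (plt_le hyw)).
rewrite -ltnS; apply: (leq_trans _ hN); rewrite ltnS; apply: proper_card; apply/properP; split.
  apply/subsetP => z; rewrite !inE => /andP [hiz hzy]; rewrite hiz /=.
  apply/andP; split; last exact: (le_trans' (plt_le hzy) (plt_le hyw)).
  apply/eqP => ezw; move: hzy hyw; rewrite ezw => /andP [_ h1] /andP [h2 h3].
  by move: h2; rewrite (le_anti h3 h1) eqxx.
by exists y; rewrite !inE ?hiy ?hyw //= /plt eqxx.
Qed.

Variables (m' : nat) (f : 'I_n -> 'I_m'.+1) (g : 'I_m'.+1 -> 'I_n).
Hypotheses (fK : cancel f g) (gK : cancel g f).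
Variable E : nat -> nat -> bool.
Hypothesis hE : forall i j, hasse le i j = E (f i) (f j).

Lemma clos_sound {k a j} : (a < m'.+1)%N -> clos E m'.+1 k a (f j) -> le (g (inord a)) j.
Proof.
elim: k a => [|k IH] a ha.
  by move/eqP=> ->; rewrite inord_val fK le_refl.
rewrite closS => /orP [/eqP ->|/seq.hasP [w]]; first by rewrite inord_val fK le_refl.
rewrite mem_iota add0n /= => hw /andP [Eaw hc].
apply: (le_trans' _ (IH w hw hc)).
apply: plt_le; have := hE (g (inord a)) (g (inord w)).
by rewrite !gK !inordK // Eaw => /andP [].
Qed.

Lemma clos_complete k i j : le i j -> (#|[set y | plt le i y && le y j]| < k)%N ->
  clos E m'.+1 k (f i) (f j).
Proof.
elim: k i => // k IH i hij hN.
rewrite closS; case: eqP => // hne; rewrite orFb.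
have hpl : plt le i j by rewrite /plt hij andbT; apply/eqP => e; apply: hne; rewrite e.
have [c hc hcj] := cover hpl.
apply/seq.hasP; exists (val (f c)); first by rewrite mem_iota /=.
rewrite -hE hc /=; apply: IH => //.
move: hc => /andP [hic _].
rewrite -ltnS; apply: (leq_trans _ hN); rewrite ltnS; apply: proper_card; apply/properP; split.
  apply/subsetP => z; rewrite !inE => /andP [hcz hzj]; rewrite hzj andbT.
  apply/andP; split; last exact: (le_trans' (plt_le hic) (plt_le hcz)).
  apply/eqP => ezi; move: hcz hic; rewrite -ezi => /andP [h0 h1] /andP [_ h2].
  by move: h0; rewrite (le_anti h1 h2) eqxx.
by exists c; rewrite !inE ?hic ?hcj //= /plt eqxx.
Qed.

Lemma clos_correct i j : le i j = clos E m'.+1 m'.+2 (f i) (f j).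
Proof.
apply/idP/idP => [h|h].
  apply: clos_complete => //.
  have h1 := max_card (mem [set y | plt le i y && le y j]).
  have hnm : #|'I_n| = m'.+1 by rewrite (bij_eq_card (Bijective fK gK)) card_ord.
  by rewrite ltnS -hnm.
by move: (clos_sound (ltn_ord _) h); rewrite inord_val fK.
Qed.

End Poset.

Lemma orient_Dn m' arrs edges (D : rel 'I_m'.+1) : orientation arrs edges D ->
  forall u v : 'I_m'.+1,
  D u v = Dn arrs edges [seq D (inord p.1) (inord p.2) | p <- edges] u v.
Proof.
case=> o1 o2 o3 u v.
set bits := [seq _ | p <- edges].
have bE : forall a b : 'I_m'.+1, (val a, val b) \in edges ->
    bitof edges bits (val a, val b) = D a b.
  move=> a b hab; rewrite /bitof /bits (nth_map (0, 0)%N) ?index_mem // nth_index //=.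
  by rewrite !inord_val.
rewrite /Dn.
case Duv: (D u v).
  case/or3P: (o1 u v Duv) => [->//|h|h]; first by rewrite h (bE u v h) Duv orbT.
  by have := o3 v u h; rewrite Duv addbT => /negbTE Dvu; rewrite h (bE v u h) Dvu !orbT.
have -> : ((val u, val v) \in arrs) = false.
  by apply/negP => /o2; rewrite Duv.
have e1 : ((val u, val v) \in edges) && bitof edges bits (val u, val v) = false.
  by case h1: ((val u, val v) \in edges) => //=; rewrite (bE u v h1) Duv.
rewrite e1 /=.
case h2: ((val v, val u) \in edges) => //=.
by have := o3 v u h2; rewrite Duv addbF => Dvu; rewrite (bE v u h2) Dvu.
Qed.

Section Quad.
Variable R : realFieldType.

Lemma quad_expand n (le : rel 'I_n) (X : 'cV[R]_n) :
  (X^T *m gram R le *m X) 0 0 = \sum_i \sum_j X i 0 * X j 0 * (le i j)%:R.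
Proof.
have -> : (X^T *m gram R le *m X) 0 0 = \sum_j \sum_i
   (2%:R^-1 * (X i 0 * X j 0 * (le i j)%:R) + 2%:R^-1 * (X j 0 * X i 0 * (le j i)%:R)).
  rewrite mxE; apply: eq_bigr => j _; rewrite mxE big_distrl /=; apply: eq_bigr => i _.
  rewrite !mxE /=; ring.
rewrite exchange_big /=.
under eq_bigr do rewrite big_split -!mulr_sumr /=.
rewrite big_split -!mulr_sumr /=.
rewrite [in X in _ + X]exchange_big /=.
set T := \sum_i _.
have h2 : (2%:R : R) != 0 by rewrite pnatr_eq0.
by rewrite [RHS]splitr mulrC [X in _ + X]mulrC.
Qed.

Lemma quad_transfer n m (f : 'I_n -> 'I_m) (bij : bijective f) (le : rel 'I_n)
  (L : nat -> nat -> bool) (x : nat -> int)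
  (hL : forall i j, le i j = L (f i) (f j)) :
  ((\col_i ((x (f i))%:~R : R))^T *m gram R le *m (\col_i ((x (f i))%:~R : R))) 0 0
  = (qz m L x)%:~R.
Proof.
rewrite quad_expand /qz sumz_cast.
have -> : \sum_(i <- iota 0 m) (sumz (iota 0 m) (fun v => x i * x v * (L i v)%:Z))%:~R
   = \sum_(u : 'I_m) \sum_(v : 'I_m) ((x u * x v * (L u v)%:Z)%:~R : R).
  have E1 : forall G : nat -> R, \sum_(i <- iota 0 m) G i = \sum_(u : 'I_m) G u.
    by move=> G; rewrite -(big_mkord xpredT G) /index_iota subn0.
  by rewrite E1; apply: eq_bigr => u _; rewrite sumz_cast E1.
rewrite (reindex f) /=; last by apply: onW_bij.
apply: eq_bigr => i _.
rewrite (reindex f) /=; last by apply: onW_bij.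
apply: eq_bigr => j _.
by rewrite !mxE hL !intrM; case: (L _ _).
Qed.
End Quad.

Lemma chkbE m arrs edges wit bits : chkb m arrs edges wit bits =
  (qz m (matf (mat m (clos (matf (mat m (Dn arrs edges bits))) m m.+1)))
     (fun i => nth 0 (wit bits) i) < 0).
Proof. by []. Qed.

Lemma main_case (R : realFieldType) n (le : rel 'I_n) m' arrs edges wit :
  is_poset le -> hasse_iso_pattern le m'.+1 arrs edges -> chk m'.+1 arrs edges wit ->
  indefinite R le.
Proof.
move=> P [f [D [bij ori hD]]] hchk.
have [g fK gK] := bij.
set bits := [seq D (inord p.1) (inord p.2) | p <- edges].
have hb : chkb m'.+1 arrs edges wit bits.
  by apply: (allP hchk); apply: allbitsP; rewrite size_map.
rewrite chkbE in hb.
set E := matf (mat m'.+1 (Dn arrs edges bits)) in hb.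
have hE : forall i j, hasse le i j = E (f i) (f j).
  by move=> i j; rewrite hD (@orient_Dn _ _ _ _ ori) /E matfE.
have hL : forall i j, le i j = matf (mat m'.+1 (clos E m'.+1 m'.+2)) (f i) (f j).
  by move=> i j; rewrite matfE // (@clos_correct _ _ P _ _ _ fK gK _ hE).
split.
  move=> hpsd; have := hpsd (\col_i ((nth 0 (wit bits) (f i))%:~R)).
  rewrite (@quad_transfer R _ _ f bij le _ (fun i => nth 0 (wit bits) i) hL).
  by rewrite leNgt ltrz0 hb.
set i0 := g ord0.
move=> hnsd; have := hnsd (\col_i ((i == i0)%:R)).
rewrite quad_expand (bigD1 i0) //= [X in _ + X]big1 => [|i hi]; last first.
  by apply: big1 => j _; rewrite !mxE (negbTE hi) !mul0r.
rewrite addr0 (bigD1 i0) //= [X in _ + X]big1 => [|j hj]; last by rewrite !mxE (negbTE hj) mulr0 mul0r.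
by rewrite !mxE eqxx (@le_refl _ _ P i0) !mul1r !addr0 ler10.
Qed.

Local Open Scope int_scope.
Definition z12 : seq int := [:: 2; 2; 2; 2; 1].
Definition z3 : seq int := [:: 8; 6; 4; 2; 1; 6; 4; 2; 4].
Definition z4 : seq int := [:: 12; 10; 8; 6; 4; 2; 1; 8; 4; 6].
Definition w5 (bits : seq bool) : seq int :=
  if head false bits then [:: 4; -2; -1; -1; -2; -2; -2; 4; -6; 4]
  else [:: 4; -2; -2; -2; -1; -2; -2; 9; -6; -5].
Definition w6 (bits : seq bool) : seq int :=
  if head false bits then [:: 8; -2; -2; -2; -2; -2; -1; 5; -6; -4]
  else [:: 4; -2; -1; -1; -2; -2; -2; 4; -6; 4].
Definition w7 (bits : seq bool) : seq int := [:: 7; -2; -2; -2; -2; -2; -3; 8; -5; -4].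
Local Close Scope int_scope.

Lemma chk1 : chk 5 F12_arrs F1_edges (treewit 5 F12_arrs F1_edges z12). Proof. by vm_compute. Qed.
Lemma chk2 : chk 5 F12_arrs F2_edges (treewit 5 F12_arrs F2_edges z12). Proof. by vm_compute. Qed.
Lemma chk3 : chk 9 [::] F3_edges (treewit 9 [::] F3_edges z3). Proof. by vm_compute. Qed.
Lemma chk4 : chk 10 [::] F4_edges (treewit 10 [::] F4_edges z4). Proof. by vm_compute. Qed.
Lemma chk5 : chk 10 F56_arrs F5_edges w5. Proof. by vm_compute. Qed.
Lemma chk6 : chk 10 F56_arrs F6_edges w6. Proof. by vm_compute. Qed.
Lemma chk7 : chk 10 F7_arrs [::] w7. Proof. by vm_compute. Qed.

Theorem lemma4p3 (R : realFieldType) (n : nat) (le : rel 'I_n) :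
  is_poset le ->
  (hasse_iso_pattern le 5 F12_arrs F1_edges \/
      hasse_iso_pattern le 5 F12_arrs F2_edges \/
      hasse_iso_pattern le 9 [::] F3_edges \/
      hasse_iso_pattern le 10 [::] F4_edges \/
      hasse_iso_pattern le 10 F56_arrs F5_edges \/
      hasse_iso_pattern le 10 F56_arrs F6_edges \/
      hasse_iso_pattern le 10 F7_arrs [::]) ->
  indefinite R le.
Proof.
move=> P [H|[H|[H|[H|[H|[H|H]]]]]].
- exact: (@main_case R _ _ _ _ _ _ P H chk1).
- exact: (@main_case R _ _ _ _ _ _ P H chk2).
- exact: (@main_case R _ _ _ _ _ _ P H chk3).
- exact: (@main_case R _ _ _ _ _ _ P H chk4).
- exact: (@main_case R _ _ _ _ _ _ P H chk5).
- exact: (@main_case R _ _ _ _ _ _ P H chk6).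
- exact: (@main_case R _ _ _ _ _ _ P H chk7).
Qed.
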